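(* Let $(X,d_X)$ be a metric space. (i) $X$ has the uniform Stone property if and only if $\Delta_X^{(u)}(r)>0$ for all $r>0$. (ii) $X$ has the coarse Stone property if and only if $\Delta_X^{(c)}(R)<\infty$ for all $R\in[0,\infty)$.
   Context: A family $\mathcal{U}$ of subsets of $X$ with union $X$ is a cover. $\mathrm{diam}(\mathcal{U})=\sup_{U\in\mathcal{U}}\mathrm{diam}(U)$; the Lebesgue number is $\mathcal{L}(\mathcal{U})=\sup\{d\in[0,\infty): \text{every } E\subseteq X \text{ with } \mathrm{diam}(E)<d \text{ is contained in some } U\in\mathcal{U}\}$. $\mathcal{U}$ is uniform if $\mathcal{L}(\mathcal{U})>0$, uniformly bounded if $\mathrm{diam}(\mathcal{U})<\infty$, point-finite if each point lies in only finitely many members. A cover $\mathcal{V}$ refines $\mathcal{U}$ if each $V\in\mathcal{V}$ is contained in some $U\in\mathcal{U}$. $X$ has the uniform Stone property if every uniform cover of $X$ has a point-finite uniform refinement; $X$ has the coarse Stone property if every uniformly bounded cover of $X$ refines a point-finite uniformly bounded cover. $\Delta_X^{(u)}(r)=\sup\{\mathcal{L}(\mathcal{U}): \mathcal{U} \text{ point-finite cover},\ \mathrm{diam}(\mathcal{U})\leq r\}$ and $\Delta_X^{(c)}(R)=\inf\{\mathrm{diam}(\mathcal{U}): \mathcal{U} \text{ point-finite cover},\ \mathcal{L}(\mathcal{U})\geq R\}$. *)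

(* Defs.v *)
From HB Require Import structures.
From mathcomp Require Import all_boot all_order all_algebra.
From mathcomp Require Import all_classical all_reals ereal.
Set Implicit Arguments. Unset Strict Implicit. Unset Printing Implicit Defensive.
Import Order.TTheory GRing.Theory Num.Theory.
Local Open Scope classical_set_scope.
Local Open Scope ring_scope.

Section Defs.
Variables (R : realType) (X : Type) (d : X -> X -> R).

Definition is_metric : Prop :=
  [/\ forall x y, 0 <= d x y,
      forall x y, d x y = 0 <-> x = y,
      forall x y, d x y = d y x &
      forall x y z, d x z <= d x y + d y z].

Local Open Scope ereal_scope.

(* diameter of a subset (diam of the empty set is 0), possibly +oo *)
Definition diam (E : set X) : \bar R :=
  ereal_sup ([set 0] `|` [set (d x y)%:E | x in E & y in E]).

Definition fdiam (U : set (set X)) : \bar R :=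
  ereal_sup ([set 0] `|` [set diam A | A in U]).

Definition is_cover (U : set (set X)) : Prop :=
  \bigcup_(A in U) A = setT.

Definition lebesgue (U : set (set X)) : \bar R :=
  ereal_sup [set r%:E | r in [set r : R | (0 <= r)%R /\
     forall E : set X, diam E < r%:E -> exists2 A, U A & E `<=` A]].

Definition uniform_cover (U : set (set X)) : Prop := 0 < lebesgue U.
Definition uniformly_bounded (U : set (set X)) : Prop := fdiam U < +oo.
Definition point_finite (U : set (set X)) : Prop :=
  forall x, finite_set [set A | U A /\ A x].
Definition refines (V U : set (set X)) : Prop :=
  forall B, V B -> exists2 A, U A & B `<=` A.

Definition uniform_Stone : Prop :=
  forall U, is_cover U -> uniform_cover U ->
    exists V, [/\ is_cover V, point_finite V, uniform_cover V & refines V U].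

Definition coarse_Stone : Prop :=
  forall U, is_cover U -> uniformly_bounded U ->
    exists V, [/\ is_cover V, point_finite V, uniformly_bounded V & refines U V].

Definition Delta_u (r : R) : \bar R :=
  ereal_sup [set lebesgue V | V in
    [set V | [/\ is_cover V, point_finite V & fdiam V <= r%:E]]].

Definition Delta_c (r : R) : \bar R :=
  ereal_inf [set fdiam V | V in
    [set V | [/\ is_cover V, point_finite V & r%:E <= lebesgue V]]].

End Defs.

(* Main.v *)
Require Import Defs.
From HB Require Import structures.
From mathcomp Require Import all_boot all_order all_algebra.
From mathcomp Require Import all_classical all_reals ereal.
From mathcomp Require Import lra.
Import Order.TTheory GRing.Theory Num.Theory.
Local Open Scope classical_set_scope.
Local Open Scope ring_scope.

Section Aux.
Variables (R : realType) (X : Type) (d : X -> X -> R).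
Local Open Scope ereal_scope.

Lemma diam_ge0 E : 0 <= diam d E.
Proof. by apply: ereal_sup_ubound; left. Qed.

Lemma diam_mono E F : E `<=` F -> diam d E <= diam d F.
Proof.
move=> EF; apply: ereal_sup_le => z [->|[x Ex [y Ey <-]]]; first by left.
by right; exists x; [apply: EF|exists y => //; apply: EF].
Qed.

Lemma diam_fdiam U A : U A -> diam d A <= fdiam d U.
Proof. by move=> UA; apply: ereal_sup_ubound; right; exists A. Qed.

Lemma lebesgue_spec U (r : R) : r%:E < lebesgue d U ->
  forall E, diam d E <= r%:E -> exists2 A, U A & E `<=` A.
Proof.
move=> /ereal_sup_gt [y [s [s0 Hs] <-] rs] E dE.
by apply: Hs; apply: le_lt_trans dE rs.
Qed.

Lemma lebesgue_ge U (r : R) : (0 <= r)%R ->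
  (forall E, diam d E < r%:E -> exists2 A, U A & E `<=` A) ->
  r%:E <= lebesgue d U.
Proof. by move=> r0 H; apply: ereal_sup_ubound; exists r. Qed.

Lemma fdiam_le U (r : \bar R) : (forall A, U A -> diam d A <= r) -> 0 <= r ->
  fdiam d U <= r.
Proof.
move=> H r0; apply: ge_ereal_sup => z [->//|[A UA <-]]; exact: H.
Qed.

Lemma cover_small (r : R) : is_metric d -> (0 <= r)%R ->
  is_cover [set E | diam d E <= r%:E].
Proof.
move=> [_ hd _ _] r0; rewrite /is_cover; apply/seteqP; split => // x _.
exists [set x] => //=; apply: ge_ereal_sup => z [->//|[a /= -> [b /= -> <-]]].
by rewrite (proj2 (hd x x) erefl) lee_fin.
Qed.

End Aux.

Theorem proposition3p3 (R : realType) (X : Type) (d : X -> X -> R) :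
  is_metric d ->
  (uniform_Stone d <-> forall r : R, 0 < r -> (0 < Delta_u d r)%E) /\
  (coarse_Stone d <-> forall r : R, 0 <= r -> (Delta_c d r < +oo)%E).
Proof.
move=> hm; split; split.
- move=> St r r0.
  have uS : uniform_cover d [set E | (diam d E <= r%:E)%E].
    apply: (@lt_le_trans _ _ r%:E); first by rewrite lte_fin.
    by apply: lebesgue_ge => [|E dE]; [exact: ltW|exists E => //; exact: ltW].
  have [V [cV pV uV rV]] := St _ (@cover_small R X d r hm (ltW r0)) uS.
  apply: (lt_le_trans uV); apply: ereal_sup_ubound; exists V => //; split => //.
  apply: fdiam_le; last by rewrite lee_fin ltW.
  move=> B /rV [A /= dA BA]; apply: le_trans dA; exact: diam_mono.
- move=> H U cU uU.
  have [r [r0 rL]] : exists r : R, (0 < r)%R /\ (r%:E < lebesgue d U)%E.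
    move: uU; rewrite /uniform_cover; case E: (lebesgue d U) => [l| |] //.
    + move=> l0; exists (l / 2)%R; move: l0; rewrite !lte_fin => l0; split; lra.
    + by move=> _; exists 1%R; split; rewrite ?ltry.
  have /ereal_sup_gt [_ [V [cV pV fV] <-] lV] := H r r0.
  exists V; split => // B VB; apply: (@lebesgue_spec R X d U r rL).
  apply: le_trans fV; exact: diam_fdiam.
- move=> St r r0.
  have fU : (fdiam d [set E | (diam d E <= r%:E)%E] < +oo)%E.
    apply: (le_lt_trans (@fdiam_le R X d _ r%:E _ _)); rewrite ?ltry ?lee_fin //.
  have [V [cV pV uV rV]] := St _ (@cover_small R X d r hm r0) fU.
  apply: (le_lt_trans _ uV); apply: ereal_inf_lbound; exists V => //; split => //.
  apply: lebesgue_ge => // E dE; apply: rV; exact: ltW.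
- move=> H U cU uU.
  have [D [D0 fD]] : exists D : R, (0 <= D)%R /\ fdiam d U = D%:E.
    move: uU; rewrite /uniformly_bounded; case E: (fdiam d U) => [l| |] //.
    + move=> _; exists l; split => //; rewrite -lee_fin -E.
      by apply: ereal_sup_ubound; left.
    + move=> _; have : (0 <= fdiam d U)%E by apply: ereal_sup_ubound; left.
      by rewrite E.
  have /ereal_inf_lt [_ [V [cV pV lV] <-] fV] := H (D + 1)%R (ltac:(lra)).
  exists V; split => //.
  move=> A UA; apply: (@lebesgue_spec R X d V D).
    by apply: lt_le_trans lV; rewrite lte_fin; lra.
  by rewrite -fD; apply: diam_fdiam.
Qed.
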